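(* Fix an integer $d\ge1$ and let $S_d=\langle a_0,\dots,a_d,s\mid s a_0 s^{-1}a_0^{-1},\ a_{i+1}a_ia_{i+1}^{-1}a_0^{-1}\ (0\le i<d)\rangle$. For every generator $u\in\{s,a_0,\dots,a_{d-1}\}$ (i.e., every generator $u\neq a_d$) we have \[ \bigl|\mathrm{erim}(\mathrm{Fan}(u^n,a_d^n))\bigr|\asymp n^d,\qquad \mathrm{Area}(\mathrm{Fan}(u^n,a_d^n))\asymp n^{d+1}. \]
   Context: For functions $f,g$ on positive integers, $f\asymp g$ means there are constants $c,C>0$ with $c\,g(n)\le f(n)\le C\,g(n)$ for all $n\ge1$. $\mathrm{Area}$ of a fan is its number of square $2$-cells, and $|w|$ is word length. Each relator of $S_d$ has the form $\lambda p\lambda^{-1}q^{-1}$ with $(\lambda,p,q)=(s,a_0,a_0)$ or $(a_{i+1},a_i,a_0)$. In the unit square of such a relator in the presentation complex, reading from a corner $B$: $\lambda$ goes from $B$ to $Q$, $p$ from $Q$ to the top corner $T$, $\lambda$ from $R$ to $T$, $q$ from $B$ to $R$; the edges $p,\lambda$ into $T$ are the top edges. The descending link is the graph on the generators in which $u,v$ are adjacent iff some relator square has top edges labeled $u$ and $v$; for $S_d$ it is the path $s - a_0 - a_1 - \cdots - a_d$, and each adjacent pair corresponds to a unique relator. For a relator $e$ put $x_e=q^{-1}\lambda$. Simple fans: $\mathrm{Fan}(a,a)$ is a single edge labeled $a$ (apex at its end), empty rims, no squares. For distinct generators $a,b$, let $a=v_0,\dots,v_k=b$ be the path in the descending link,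 take copies $C_i$ of the relator square with top edges $v_{i-1},v_i$, and glue the top edge $v_i$ of $C_i$ to that of $C_{i+1}$ ($1\le i<k$); the common top corner is the apex. The vertex rim is the concatenation of the two-letter words read along the bottom of $C_i$ from the initial vertex of its top edge $v_{i-1}$ to the initial vertex of its top edge $v_i$ (each is $q^{-1}\lambda$ or $\lambda^{-1}q$), so it has the form $a_1^{-1}b_1\cdots a_k^{-1}b_k$; the edge rim $\mathrm{erim}$ replaces $q^{-1}\lambda$ by $x_e$ and $\lambda^{-1}q$ by $x_e^{-1}$. Fans of height $n\ge2$: for positive words $u=au'$, $v=bv'$ of length $n$ with $a,b$ generators, let $F'=\mathrm{Fan}(u',v')$ with vertex rim $a_1^{-1}b_1\cdots a_k^{-1}b_k$, put $b_0=a$, $a_{k+1}=b$, and attach for $i=1,\dots,k+1$ the simple fan $\mathrm{Fan}(b_{i-1},a_i)$ with apex at the rim vertex where the edges $b_{i-1}$ and $a_i$ terminate (for $i=1$, the initial vertex of the side $u'$, the new edge $a$ extending that side; symmetrically for $i=k+1$), identifying its top edges with the corresponding edges. This is $\mathrm{Fan}(u,v)$; its vertex and edge rims are the concatenations of those of the attached simple fans. *)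

(* Defs.v *)
From mathcomp Require Import all_boot all_order all_algebra.
Set Implicit Arguments. Unset Strict Implicit. Unset Printing Implicit Defensive.
Import Order.TTheory GRing.Theory Num.Theory.

(* Generators of S_d: s (Gs) and a_i (Ga i).  Only a_0..a_d are used. *)
Inductive gen := Gs | Ga of nat.

(* Position of a generator along the descending link path s - a_0 - ... - a_d *)
Definition pos (g : gen) : nat := if g is Ga i then i.+1 else 0.
Definition gen_at (k : nat) : gen := if k is i.+1 then Ga i else Gs.

(* A relator  lam p lam^-1 q^-1 ; top edges are p and lam. *)
Record relator := Rel { lam : gen; pp : gen; qq : gen }.

Definition relators (d : nat) : seq relator :=
  Rel Gs (Ga 0) (Ga 0) :: [seq Rel (Ga i.+1) (Ga i) (Ga 0) | i <- iota 0 d].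

(* The unique relator whose top edges are the generators at positions
   j and j.+1 of the descending link path (the j-th edge of the path). *)
Definition rel_edge (j : nat) : relator :=
  if j is i.+1 then Rel (Ga i.+1) (Ga i) (Ga 0) else Rel Gs (Ga 0) (Ga 0).

(* A square copy C of relator e, glued in a simple fan with top edges
   x (=v_{i-1}) then y (=v_i).  We record (e, o) where o = true iff
   x = lam, in which case the bottom word from the initial vertex of the
   top edge x to that of the top edge y is q^-1 lam (edge letter x_e);
   otherwise it is lam^-1 q (edge letter x_e^-1). *)
Definition square (x y : gen) : relator * bool :=
  let e := rel_edge (minn (pos x) (pos y)) in (e, pos x == pos (lam e)).

(* Vertex-rim contribution of a square, as the pair (a_i, b_i) of the
   two-letter word a_i^-1 b_i. *)
Definition vpair (sq : relator * bool) : gen * gen :=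
  if sq.2 then (qq sq.1, lam sq.1) else (lam sq.1, qq sq.1).

(* Edge-rim letter of a square: (e, true) = x_e, (e, false) = x_e^-1. *)
Definition eletter (sq : relator * bool) : relator * bool := sq.

(* Squares of the simple fan Fan(a,b), in order C_1, ..., C_k along the
   descending-link path a = v_0, ..., v_k = b.  Fan(a,a) has no squares. *)
Definition simple_fan (a b : gen) : seq (relator * bool) :=
  let i := pos a in let j := pos b in
  if i <= j then [seq square (gen_at k) (gen_at k.+1) | k <- iota i (j - i)]
  else [seq square (gen_at k.+1) (gen_at k) | k <- rev (iota j (i - j))].

(* fan u v = (squares of the outermost layer, i.e. of the attached simple
   fans, in rim order ; total number of squares = Area) for Fan(u,v),
   u, v positive words of the same length n >= 1. *)
Fixpoint fan (u v : seq gen) : seq (relator * bool) * nat :=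
  match u, v with
  | a :: u', b :: v' =>
    match u', v' with
    | [::], [::] => let sq := simple_fan a b in (sq, size sq)
    | _, _ =>
      let F' := fan u' v' in
      let rim := map vpair F'.1 in                 (* (a_1,b_1)..(a_k,b_k) *)
      let as_ := rcons (map fst rim) b in          (* a_1..a_k, a_{k+1} = b *)
      let bs := a :: map snd rim in                (* b_0 = a, b_1..b_k *)
      let sq := flatten [seq simple_fan p.1 p.2 | p <- zip bs as_] in
      (sq, F'.2 + size sq)
    end
  | _, _ => ([::], 0)
  end.

Definition vrim (u v : seq gen) : seq (gen * gen) := map vpair (fan u v).1.
Definition erim (u v : seq gen) : seq (relator * bool) := map eletter (fan u v).1.
Definition area (u v : seq gen) : nat := (fan u v).2.

Definition asymp (f g : nat -> nat) : Prop :=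
  exists c C : rat, (0 < c)%R /\ (0 < C)%R /\
    forall n : nat, (1 <= n)%N ->
      (c * (g n)%:R <= (f n)%:R /\ (f n)%:R <= C * (g n)%:R)%R.

Example ex1 : (size (erim (nseq 3 (Ga 0)) (nseq 3 (Ga 1))), area (nseq 3 (Ga 0)) (nseq 3 (Ga 1))) = (3, 6).
Proof. by vm_compute. Qed.

(* Main.v *)
Require Import Defs.
From mathcomp Require Import all_boot all_order all_algebra.
From mathcomp Require Import zify.
Import GRing.Theory Num.Theory.

Definition bb (k : nat) : nat := if k is 0 then 0 else 1.
Fixpoint Gn (d bx : nat) (L : seq nat) : seq nat :=
  match L with
  | [::] => iota bx (d.+1 - bx)
  | y :: L' => iota bx (y.+1 - bx) ++ Gn d (bb y) L'
  end.
Definition lay (d pu n : nat) : seq nat := iter n.+1 (Gn d pu) [::].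
Definition sqk (k : nat) := square (gen_at k) (gen_at k.+1).
Fixpoint ar (d pu n : nat) : nat :=
  if n is n'.+1 then ar d pu n' + size (lay d pu n) else size (lay d pu 0).

Lemma pos_gen_at k : pos (gen_at k) = k.
Proof. by case: k. Qed.

Lemma vpair_sqk k : vpair (sqk k) = (gen_at k.+1, gen_at (bb k)).
Proof.
case: k => [|k] //.
by rewrite /sqk /square /= minnSS (minn_idPl (leqnSn _)) eqSS (ltn_eqF (ltnSn k)).
Qed.

Lemma sf_up x y : pos x <= pos y ->
  simple_fan x y = map sqk (iota (pos x) (pos y - pos x)).
Proof. by move=> h; rewrite /simple_fan h. Qed.

Lemma gfan d x L : pos x <= (head d L).+1 ->
  flatten [seq simple_fan p.1 p.2 | p <- zip (x :: map snd (map vpair (map sqk L)))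
     (rcons (map fst (map vpair (map sqk L))) (Ga d))] = map sqk (Gn d (pos x) L).
Proof.
elim: L x => [|y L IH] x /= h.
  by rewrite cats0 sf_up.
rewrite vpair_sqk /= sf_up // IH; last first.
  by rewrite pos_gen_at; case: y {h} => //=.
by rewrite map_cat pos_gen_at.
Qed.

Lemma Gn_cons d pu L : pu <= d -> pu <= head d L -> exists L', Gn d pu L = pu :: L'.
Proof.
case: L => [|y L] /= h1 h2.
  by rewrite subSn //=; eexists.
by rewrite subSn //=; eexists.
Qed.

Lemma lay_cons d pu n : pu <= d -> exists L', lay d pu n = pu :: L'.
Proof.
move=> h; elim: n => [|n [L' IH]]; first exact: Gn_cons.
rewrite /lay iterS -/(lay d pu n) IH; exact: Gn_cons.
Qed.

Lemma layS d pu n : lay d pu n.+1 = Gn d pu (lay d pu n).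
Proof. by rewrite /lay iterS. Qed.

Lemma fan_lay d u n : pos u <= d ->
  fan (nseq n.+1 u) (nseq n.+1 (Ga d)) = (map sqk (lay d (pos u) n), ar d (pos u) n).
Proof.
move=> h; elim: n => [|n IH].
  by rewrite /= sf_up ?size_map //= ?leqW.
have -> : fan (nseq n.+2 u) (nseq n.+2 (Ga d)) =
  (let F' := fan (nseq n.+1 u) (nseq n.+1 (Ga d)) in
      let rim := map vpair F'.1 in
      let as_ := rcons (map fst rim) (Ga d) in
      let bs := u :: map snd rim in
      let sq := flatten [seq simple_fan p.1 p.2 | p <- zip bs as_] in
      (sq, F'.2 + size sq)) by [].
rewrite IH /= gfan; last first.
  by have [L' ->] := lay_cons d (pos u) n h.
by rewrite -layS size_map.
Qed.

Lemma cm_iota i m n : count_mem i (iota m n) = (m <= i < m + n).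
Proof. by rewrite count_uniq_mem ?iota_uniq // mem_iota. Qed.

Lemma C0 d bx L : bx <= 1 -> count_mem 0 (Gn d bx L) = (bx == 0) + count_mem 0 L.
Proof.
elim: L bx => [|y L IH] bx h /=.
  rewrite cm_iota; case: bx h => [|[]] //=.
rewrite count_cat cm_iota IH; last by case: y.
case: bx h => [|[]] // _; case: y => //= *; lia.
Qed.

Lemma Cj d j bx L : 1 <= j -> bx <= 1 ->
  count_mem j (Gn d bx L) = count (leq j) L + (j <= d).
Proof.
move=> hj; elim: L bx => [|y L IH] bx h /=.
  rewrite cm_iota; case: bx h => [|[]] //= _; rewrite ?hj /=; lia.
rewrite count_cat cm_iota IH; last by case: y.
case: bx h => [|[]] // _ /=; rewrite ?hj /=; lia.
Qed.

Lemma Gn_le d bx L : all (fun x => x <= d) L -> all (fun x => x <= d) (Gn d bx L).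
Proof.
elim: L bx => [|y L IH] bx /=.
  move=> _; apply/allP => x; rewrite mem_iota; lia.
move=> /andP [hy hL]; rewrite all_cat IH // andbT.
apply/allP => x; rewrite mem_iota; lia.
Qed.

Lemma lay_le d pu n : all (fun x => x <= d) (lay d pu n).
Proof. by elim: n => [|n IH]; rewrite ?layS; apply: Gn_le. Qed.

Lemma cnt_split j L : count (leq j) L = count_mem j L + count (leq j.+1) L.
Proof. elim: L => //= x L ->; case: (ltngtP j x) => /=; lia. Qed.

Lemma cnt_big d j L : all (fun x => x <= d) L -> d < j -> count (leq j) L = 0.
Proof.
move=> hL hj; apply/eqP; rewrite -leqn0 leqNgt -has_count; apply/hasP => [[x /(allP hL) hx /= hjx]].
lia.
Qed.


Lemma recur0 d pu n : pu <= d ->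
  count_mem 0 (lay d pu n.+1) = count_mem 0 (lay d pu n) + (pu == 0).
Proof.
move=> h; rewrite layS; have [L' ->] := lay_cons d pu n h.
rewrite /= subSnn /= C0; last by case: pu {h}.
case: pu {h} => //= *; lia.
Qed.

Lemma recurj d pu n j : pu <= d -> 1 <= j ->
  count_mem j (lay d pu n.+1) + (j <= pu) =
  count (leq j) (lay d pu n) + (pu == j) + (j <= d).
Proof.
move=> h hj; rewrite layS; have [L' ->] := lay_cons d pu n h.
rewrite /= subSnn /= Cj //; last by case: pu {h}.
lia.
Qed.

Lemma cnt_iota j m n : count (leq j) (iota m n) <= n /\ count (leq j) (iota m n) <= m + n - j.
Proof.
elim: n m => [|n IH] m /=; first by [].
have [h1 h2] := IH m.+1; case: (leqP j m) => /= h; lia.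
Qed.

Lemma lay0 d pu : lay d pu 0 = iota pu (d.+1 - pu).
Proof. by []. Qed.

Lemma expmono m n e : m <= n -> m ^ e <= n ^ e.
Proof. by move=> h; case: e => // e; rewrite leq_exp2r. Qed.

Lemma up d pu : pu <= d -> forall n k j, 1 <= j -> d.+1 - j = k ->
  count (leq j) (lay d pu n) + 1 <= n.+2 ^ k.
Proof.
move=> h; elim=> [|n IHn] k.
  move=> j hj hk; rewrite lay0; have [_ h2] := cnt_iota j pu (d.+1 - pu).
  have := ltn_expl k (isT : 1 < 2); lia.
elim: k => [|k IHk] j hj hk.
  by rewrite (@cnt_big d j _ (lay_le d pu n.+1)) ?expn0 //; lia.
rewrite cnt_split.
have e1 := @recurj d pu n j h hj.
have e2 := IHn k.+1 j hj hk.
have e3 := IHk j.+1 isT (ltac:(lia)).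
have e4 : n.+2 ^ k <= n.+3 ^ k by apply: expmono.
rewrite !expnS in e2 *; nia.
Qed.

Lemma low d pu : pu <= d -> forall n m, 1 <= m <= d ->
  'C(n.+1, m) <= count (leq (d.+1 - m)) (lay d pu n).
Proof.
move=> h; elim=> [|n IHn] m /andP [hm1 hm2].
  case: m hm1 hm2 => [|[|m]] // _ hm.
  rewrite bin1 lay0 subn1 /= -has_count; apply/hasP; exists d => //.
  rewrite mem_iota; lia.
case: m hm1 hm2 => [|[|m]] // _ hm.
  rewrite subn1 /= cnt_split (@cnt_big d _ _ (lay_le d pu n.+1)) // addn0.
  have e1 := @recurj d pu n _ h (ltac:(lia) : 1 <= d).
  have e2 := IHn 1 (ltac:(lia)); rewrite subn1 /= bin1 in e2.
  rewrite bin1; lia.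
rewrite binS.
have e2 := IHn m.+2 (ltac:(lia)).
have e3 := IHn m.+1 (ltac:(lia)).
have e4 := @recurj d pu n _ h (ltac:(lia) : 1 <= d.+1 - m.+2).
have e5 := @recurj d pu n _ h (ltac:(lia) : 1 <= (d.+1 - m.+2).+1).
rewrite -> (ltac:(lia) : d.+1 - m.+1 = (d.+1 - m.+2).+1) in e3.
rewrite cnt_split (cnt_split (d.+1 - m.+2).+1).
lia.
Qed.

Lemma c0_up d pu n : pu <= d -> count_mem 0 (lay d pu n) <= n.+1.
Proof.
move=> h; elim: n => [|n IH].
  by rewrite lay0 cm_iota leq_b1.
rewrite recur0 // -addn1; exact: leq_add IH (leq_b1 _).
Qed.

Lemma size_cnt L : size L = count (leq 0) L.
Proof. by elim: L => //= x L ->. Qed.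

Lemma sz_up d pu n : 1 <= d -> pu <= d ->
  size (lay d pu n) <= 2 ^ d.+1 * n.+1 ^ d.
Proof.
move=> hd h; rewrite size_cnt cnt_split.
have e1 := @c0_up d pu n h.
have e2 := @up d pu h n d 1 isT (ltac:(lia) : d.+1 - 1 = d).
have e3 : n.+2 ^ d <= 2 ^ d * n.+1 ^ d.
  rewrite -expnMn; apply: expmono; lia.
have e4 : n.+1 <= n.+1 ^ d by rewrite -{1}(expn1 n.+1) leq_pexp2l.
rewrite expnS; nia.
Qed.

Lemma sz_low d pu n : 1 <= d -> pu <= d ->
  'C(n.+1, d) <= size (lay d pu n) /\ 1 <= size (lay d pu n).
Proof.
move=> hd h; have e1 := @low d pu h n _ (ltac:(lia) : 1 <= d <= d).
have e2 := @low d pu h n _ (ltac:(lia) : 1 <= 1 <= d).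
have e3 := count_size (leq (d.+1 - d)) (lay d pu n).
have e4 := count_size (leq (d.+1 - 1)) (lay d pu n).
rewrite bin1 in e2; lia.
Qed.

Lemma arS d pu n : ar d pu n.+1 = ar d pu n + size (lay d pu n.+1).
Proof. by []. Qed.

Lemma ar_up d pu n : 1 <= d -> pu <= d ->
  ar d pu n <= 2 ^ d.+1 * n.+1 ^ d.+1.
Proof.
move=> hd h; elim: n => [|n IH].
  by rewrite /= exp1n muln1 (leq_trans (@sz_up d pu 0 hd h)) // exp1n muln1.
rewrite arS; have e1 := @sz_up d pu n.+1 hd h.
have e2 : n.+1 ^ d <= n.+2 ^ d by apply: expmono.
rewrite [n.+2 ^ _]expnS [n.+1 ^ _]expnS in IH *.
have e3 : 2 ^ d.+1 * (n.+1 * n.+1 ^ d) <= 2 ^ d.+1 * (n.+1 * n.+2 ^ d).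
  by rewrite leq_mul2l leq_mul2l e2 !orbT.
have -> : 2 ^ d.+1 * (n.+2 * n.+2 ^ d) = 2 ^ d.+1 * (n.+1 * n.+2 ^ d) + 2 ^ d.+1 * n.+2 ^ d.
  by rewrite mulSn mulnDr addnC.
lia.
Qed.

Lemma ar_low d pu n : 1 <= d -> pu <= d ->
  'C(n.+2, d.+1) <= ar d pu n /\ 1 <= ar d pu n.
Proof.
move=> hd h; elim: n => [|n [IH1 IH2]].
  have [_ e] := @sz_low d pu 0 hd h; split => //=.
  case: d hd h e => [|[|d]] //= *; by rewrite bin_small.
rewrite arS binS; have [e1 e2] := @sz_low d pu n.+1 hd h; lia.
Qed.

Lemma ffact_low N m : (N - m) ^ m <= N ^_ m.
Proof.
elim: m => [|m IH]; first by rewrite ffactn0.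
rewrite ffactnSr expnSr; apply: leq_mul; last by lia.
apply: leq_trans IH; apply: expmono; lia.
Qed.

Lemma fact_le m : m`! <= m ^ m.
Proof.
elim: m => // m IH; rewrite factS expnS leq_mul2l /=.
apply: leq_trans IH _; apply: expmono; lia.
Qed.

Lemma binlow m N : 0 < m -> N ^ m <= (2 * m) ^ m * ('C(N, m) + 1).
Proof.
move=> hm; case: (ltnP N (2 * m)) => h.
  rewrite mulnDr muln1; apply: leq_trans (leq_addl _ _); apply: expmono; lia.
rewrite mulnDr muln1; apply: leq_trans (leq_addr _ _).
apply: (@leq_trans ((2 * (N - m)) ^ m)); first by apply: expmono; lia.
rewrite !expnMn -mulnA leq_mul2l; apply/orP; right.
apply: leq_trans (ffact_low N m) _.
rewrite -bin_ffact mulnC leq_mul2r fact_le orbT //.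
Qed.

Lemma asymp_of (f g : nat -> nat) (K C : nat) : 0 < K -> 0 < C ->
  (forall n, 1 <= n -> g n <= K * f n /\ f n <= C * g n) -> asymp f g.
Proof.
move=> hK hC H; exists (K%:R^-1)%R, (C%:R)%R; split; first by rewrite invr_gt0 ltr0n.
split; first by rewrite ltr0n.
move=> n /H [h1 h2]; split.
  by rewrite ler_pdivrMl ?ltr0n // -natrM ler_nat.
by rewrite -natrM ler_nat.
Qed.

Theorem mainTheorem6 (d : nat) (hd : (1 <= d)%N) (u : gen)
  (hu : u = Gs \/ exists i, (i < d)%N /\ u = Ga i) :
  asymp (fun n => size (erim (nseq n u) (nseq n (Ga d)))) (fun n => n ^ d) /\
  asymp (fun n => area (nseq n u) (nseq n (Ga d))) (fun n => n ^ d.+1).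
Proof.
have h : pos u <= d by case: hu => [->|[i [hi ->]]].
split.
  apply: (@asymp_of _ _ (2 * (2 * d) ^ d) (2 ^ d.+1)).
  - by rewrite muln_gt0 expn_gt0; lia.
  - by rewrite expn_gt0.
  case=> // k _; rewrite /erim fan_lay // !size_map; split.
    have [e1 e2] := @sz_low d (pos u) k hd h.
    have := @binlow d k.+1 hd.
    have : (2 * d) ^ d * ('C(k.+1, d) + 1) <= (2 * d) ^ d * (2 * size (lay d (pos u) k)).
      by rewrite leq_mul2l; apply/orP; right; lia.
    rewrite mulnA [_ * 2]mulnC; lia.
  exact: @sz_up d (pos u) k hd h.
apply: (@asymp_of _ _ (2 * (2 * d.+1) ^ d.+1) (2 ^ d.+1)).
- by rewrite muln_gt0 expn_gt0; lia.
- by rewrite expn_gt0.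
case=> // k _; rewrite /area fan_lay //=; split.
  have [e1 e2] := @ar_low d (pos u) k hd h.
  have e3 := @binlow d.+1 k.+1 isT.
  have e4 : 'C(k.+1, d.+1) <= 'C(k.+2, d.+1) by apply: leq_bin2l.
  have : (2 * d.+1) ^ d.+1 * ('C(k.+1, d.+1) + 1) <= (2 * d.+1) ^ d.+1 * (2 * ar d (pos u) k).
    by rewrite leq_mul2l; apply/orP; right; lia.
  rewrite mulnA [_ * 2]mulnC; lia.
exact: @ar_up d (pos u) k hd h.
Qed.
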